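(* Assume the setting below, on the mesh $S_\lambda$ with either $\lambda=N$ or $\lambda=\varepsilon^{-1}$. Suppose there are a constant $C^*>0$ and numbers $\eta_1,\eta_2\ge 0$ such that the truncation error of $w$ satisfies \[ |\tau_i[w]|\le \tau_i^*:=\begin{cases} C^*\eta_1\left(1+\varepsilon^{-1}e^{-\beta x_i/\varepsilon}\right), & 1\le i\le J-1,\\ C^*\eta_2, & J\le i\le N-1.\end{cases} \] Then \[ \|w^N-W^N\|\le C\eta,\qquad \eta=\max\{\kappa\eta_1,\eta_2\}, \] where $\kappa=1$ if $\lambda=N$ and $\kappa=1+|\ln\varepsilon|N^{-1}$ if $\lambda=\varepsilon^{-1}$. Here $C$ depends only on $C^*$ and the data $b,c,\beta,Q,a$; it does not depend on $\varepsilon$, $N$, $\eta_1$ or $\eta_2$.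
   Context: Standing setup. Let $0<\varepsilon<1$. Let $b,c,f\in C^4[0,1]$, and let $\beta$ be a constant with $b(x)>\beta>0$ and $c(x)\ge0$ on $[0,1]$. Let $u$ be the solution of $-\varepsilon u''-b u'+cu=f$ on $(0,1)$ with $u(0)=u(1)=0$. Let $u_0$ be the reduced solution, i.e. the solution of $-b u_0'+c u_0=f$ on $(0,1)$ with $u_0(1)=0$. Set $w=u-u_0$; it solves $-\varepsilon w''-bw'+cw=\varepsilon u_0''$ on $(0,1)$, $w(0)=-u_0(0)$, $w(1)=0$. Mesh $S_\lambda$. $N$ is a positive integer. $Q\in(0,1)$ is a fixed rational number such that $J=QN$ is an integer. $a>0$ is a mesh parameter, and $\lambda\in\{N,\varepsilon^{-1}\}$. The transition point is $\xi=(a\varepsilon/\beta)\ln\lambda$, assumed to satisfy $\xi\le Q$. Set $h=\xi/J$ and $H=(1-\xi)/(N-J)$. The mesh points are $x_i=ih$ for $0\le i\le J$ and $x_i=\xi+(i-J)H$ for $J\le i\le N$. Write $h_i=x_i-x_{i-1}$ and $\hbar_i=(h_i+h_{i+1})/2$. $S_N$ is the Shishkin mesh and $S_{1/\varepsilon}$ is the A-mesh. Scheme. For mesh functions define $D^+U_i=(U_{i+1}-U_i)/h_{i+1}$, $D^-U_i=(U_i-U_{i-1})/h_i$ and $D''U_i=(D^+U_i-D^-U_i)/\hbar_i$. Let $\sigma(\rho)=2\rho/(e^{2\rho}-1)$ for $\rho>0$, $\sigma(0)=1$, and $\rho_i=b(x_i)h_{i+1}/(2\varepsilon)$. The ASI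 operator is \[ L^NU_i=-\varepsilon\sigma(\rho_i)D''U_i-b(x_i)D^+U_i+c(x_i)U_i,\qquad 1\le i\le N-1. \] $W^N$ denotes the solution of $W^N_0=-u_0(0)$, $L^NW^N_i=\varepsilon u_0''(x_i)$ for $1\le i\le N-1$, $W^N_N=0$. For a function $g$, $g^N$ is its restriction to the mesh, and $\|U\|=\max_{0\le i\le N}|U_i|$. For smooth $g$ the truncation error is \[ \tau_i[g]=-\varepsilon\sigma(\rho_i)D''g(x_i)-b(x_i)D^+g(x_i)+\varepsilon g''(x_i)+b(x_i)g'(x_i),\qquad 1\le i\le N-1. \] $C$ denotes a generic positive constant independent of $\varepsilon$ and $N$. *)

(* Defs.v *)
From Stdlib Require Import Reals Lra.
From Coquelicot Require Import Coquelicot.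
Open Scope R_scope.

Definition deriv_on01 (g g' : R -> R) : Prop :=
  forall x, 0 <= x <= 1 ->
    filterlim (fun y => (g y - g x) / (y - x))
      (within (fun y => 0 <= y <= 1 /\ y <> x) (locally x)) (locally (g' x)).

Definition cont_on01 (g : R -> R) : Prop :=
  forall x, 0 <= x <= 1 ->
    filterlim g (within (fun y => 0 <= y <= 1) (locally x)) (locally (g x)).

Definition Ck01 (k : nat) (g : R -> R) : Prop :=
  exists D : nat -> R -> R,
    (forall x, 0 <= x <= 1 -> D 0%nat x = g x) /\
    (forall j, (j < k)%nat -> deriv_on01 (D j) (D (S j))) /\
    cont_on01 (D k).

(** Mesh S_lambda.  [shishkin = true] : lambda = N (Shishkin mesh);
    [shishkin = false] : lambda = 1/eps (A-mesh). *)
Definition lam (shishkin : bool) (eps : R) (N : nat) : R :=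
  if shishkin then INR N else / eps.

Definition kappa (shishkin : bool) (eps : R) (N : nat) : R :=
  if shishkin then 1 else 1 + Rabs (ln eps) / INR N.

Definition xi (shishkin : bool) (a beta eps : R) (N : nat) : R :=
  a * eps / beta * ln (lam shishkin eps N).

Definition mesh (shishkin : bool) (a beta eps : R) (N J : nat) (i : nat) : R :=
  let xi := xi shishkin a beta eps N in
  let h := xi / INR J in
  let H := (1 - xi) / (INR N - INR J) in
  if (i <=? J)%nat then INR i * h else xi + (INR i - INR J) * H.

Definition hstep (x : nat -> R) (i : nat) : R := x i - x (i - 1)%nat.
Definition hbar (x : nat -> R) (i : nat) : R := (hstep x i + hstep x (S i)) / 2.

Definition Dplus (x : nat -> R) (U : nat -> R) (i : nat) : R :=
  (U (S i) - U i) / hstep x (S i).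
Definition Dminus (x : nat -> R) (U : nat -> R) (i : nat) : R :=
  (U i - U (i - 1)%nat) / hstep x i.
Definition D2 (x : nat -> R) (U : nat -> R) (i : nat) : R :=
  (Dplus x U i - Dminus x U i) / hbar x i.

Definition sigma (rho : R) : R :=
  if Req_EM_T rho 0 then 1 else 2 * rho / (exp (2 * rho) - 1).

Definition rho (eps : R) (b : R -> R) (x : nat -> R) (i : nat) : R :=
  b (x i) * hstep x (S i) / (2 * eps).

Definition LN (eps : R) (b c : R -> R) (x : nat -> R) (U : nat -> R) (i : nat) : R :=
  - eps * sigma (rho eps b x i) * D2 x U i - b (x i) * Dplus x U i + c (x i) * U i.

Definition tau (eps : R) (b : R -> R) (x : nat -> R) (g : R -> R) (i : nat) : R :=
  - eps * sigma (rho eps b x i) * D2 x (fun j => g (x j)) i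
  - b (x i) * Dplus x (fun j => g (x j)) i
  + eps * Derive_n g 2 (x i) + b (x i) * Derive g (x i).

(* Main.v *)
From Pilot Require Import Defs.
From Stdlib Require Import Reals.
From Coquelicot Require Import Coquelicot.
Open Scope R_scope.
From Stdlib Require Import Lra Lia.
Import Pilot.Defs.

Lemma interior_derive (g D0 D1 : R -> R) x :
  (forall y, 0 <= y <= 1 -> D0 y = g y) -> deriv_on01 D0 D1 -> 0 < x < 1 ->
  ex_derive g x.
Proof.
  intros H0 Hd Hx. exists (D1 x). apply is_derive_Reals.
  intros e He.
  destruct (Hd x ltac:(lra) (ball (D1 x) e) (locally_ball (D1 x) (mkposreal e He))) as [d Hdd].
  assert (Hp : 0 < Rmin d (Rmin x (1 - x))).
  { destruct d as [d dp]; simpl. repeat apply Rmin_pos; lra. }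
  exists (mkposreal _ Hp). intros h Hh0 Hh. simpl in Hh.
  assert (H1 := Rmin_l d (Rmin x (1-x))). assert (H2 := Rmin_r d (Rmin x (1-x))).
  assert (H3 := Rmin_l x (1-x)). assert (H4 := Rmin_r x (1-x)).
  assert (Hb : ball x d (x + h)).
  { unfold ball; simpl; unfold AbsRing_ball, abs, minus, plus, opp; simpl.
    replace (x + h + - x) with h by ring. lra. }
  assert (Hr : Rabs h < x /\ Rabs h < 1 - x) by lra.
  destruct Hr as [Hr1 Hr2].
  assert (Hin : 0 <= x + h <= 1 /\ x + h <> x).
  { split. - split; unfold Rabs in *; destruct (Rcase_abs h); lra.
    - intro E. apply Hh0. lra. }
  specialize (Hdd (x+h) Hb Hin).
  unfold ball in Hdd; simpl in Hdd; unfold AbsRing_ball, abs, minus, plus, opp in Hdd; simpl in Hdd.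
  rewrite (H0 (x+h)) in Hdd by lra. rewrite (H0 x) in Hdd by lra.
  replace (x + h - x) with h in Hdd by ring. exact Hdd.
Qed.

Lemma Ck_ex_derive k g x : (0 < k)%nat -> Ck01 k g -> 0 < x < 1 -> ex_derive g x.
Proof.
  intros Hk [D [H0 [H1 _]]] Hx. eapply interior_derive; eauto.
Qed.

Lemma loc01 x (P : R -> Prop) : 0 < x < 1 -> (forall y, 0 < y < 1 -> P y) -> locally x P.
Proof.
  intros Hx HP.
  assert (Hp : 0 < Rmin x (1 - x)) by (apply Rmin_pos; lra).
  exists (mkposreal _ Hp). intros y Hy.
  unfold ball in Hy; simpl in Hy; unfold AbsRing_ball, abs, minus, plus, opp in Hy; simpl in Hy.
  assert (H3 := Rmin_l x (1-x)). assert (H4 := Rmin_r x (1-x)).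
  apply HP. unfold Rabs in Hy; destruct (Rcase_abs (y + - x)); lra.
Qed.

Lemma w_eq (b c f u u0 : R -> R) eps beta x :
  Ck01 4 b -> Ck01 4 c -> Ck01 4 f -> 0 < beta ->
  (forall x, 0 <= x <= 1 -> beta < b x) ->
  (forall x, 0 < x < 1 -> ex_derive u x /\ ex_derive (Derive u) x) ->
  (forall x, 0 < x < 1 ->
       - eps * Derive_n u 2 x - b x * Derive u x + c x * u x = f x) ->
  (forall x, 0 < x < 1 -> ex_derive u0 x) ->
  (forall x, 0 < x < 1 -> - b x * Derive u0 x + c x * u0 x = f x) ->
  0 < x < 1 ->
  - eps * Derive_n (fun y => u y - u0 y) 2 x - b x * Derive (fun y => u y - u0 y) x
  + c x * (u x - u0 x) = eps * Derive_n u0 2 x.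
Proof.
  intros Hb Hc Hf Hbeta Hbb Hu Hue Hu0 Hu0e Hx.
  assert (Ed : forall y, 0 < y < 1 ->
     Derive u0 y = (c y * u0 y - f y) / b y).
  { intros y Hy. rewrite <- (Hu0e y Hy). field.
    specialize (Hbb y ltac:(lra)). lra. }
  assert (Ex0 : ex_derive (Derive u0) x).
  { apply (ex_derive_ext_loc (fun y => (c y * u0 y - f y) / b y)).
    - apply loc01; auto. intros y Hy; symmetry; auto.
    - apply ex_derive_div.
      + apply (ex_derive_minus (fun y => c y * u0 y) f).
        * apply ex_derive_mult; [apply (Ck_ex_derive 4); auto | auto].
        * apply (Ck_ex_derive 4); auto.
      + apply (Ck_ex_derive 4); auto.
      + specialize (Hbb x ltac:(lra)). lra. }
  assert (Dw : forall y, 0 < y < 1 -> Derive (fun y => u y - u0 y) y = Derive u y - Derive u0 y).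
  { intros y Hy. apply Derive_minus; [apply Hu | apply Hu0]; auto. }
  assert (D2w : Derive_n (fun y => u y - u0 y) 2 x = Derive_n u 2 x - Derive_n u0 2 x).
  { simpl. rewrite (Derive_ext_loc _ (fun y => Derive u y - Derive u0 y)).
    - apply Derive_minus; [apply Hu; auto | exact Ex0].
    - apply loc01; auto. }
  rewrite D2w, Dw by auto.
  specialize (Hue x Hx). specialize (Hu0e x Hx). lra.
Qed.

Lemma sigma_bounds r : 0 <= r -> 0 < Defs.sigma r <= 1.
Proof.
  intros Hr. unfold Defs.sigma. destruct (Req_EM_T r 0) as [E|E]; [lra|].
  assert (H := exp_ineq1 (2*r) ltac:(lra)).
  split.
  - apply Rdiv_lt_0_compat; lra.
  - apply Rmult_le_reg_r with (exp (2*r) - 1); [lra|].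
    unfold Rdiv. rewrite Rmult_assoc, Rinv_l by lra. lra.
Qed.

Lemma argmin_last (v : nat -> R) N : exists k, (k <= N)%nat /\
  (forall j, (j <= N)%nat -> v k <= v j) /\ (forall j, (k < j <= N)%nat -> v k < v j).
Proof.
  induction N as [|N IH].
  - exists 0%nat. split; [lia|split].
    + intros j Hj. replace j with 0%nat by lia. lra.
    + intros j Hj; lia.
  - destruct IH as [k [Hk [H1 H2]]].
    destruct (Rle_dec (v (S N)) (v k)) as [Hle|Hlt].
    + exists (S N). split; [lia|split].
      * intros j Hj. destruct (Nat.eq_dec j (S N)) as [->|Hn]; [lra|].
        specialize (H1 j ltac:(lia)); lra.
      * intros j Hj; lia.
    + exists k. split; [lia|split].
      * intros j Hj. destruct (Nat.eq_dec j (S N)) as [->|Hn]; [lra|]. apply H1; lia.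
      * intros j Hj. destruct (Nat.eq_dec j (S N)) as [->|Hn]; [lra|]. apply H2; lia.
Qed.

Lemma dmp eps (b c : R -> R) (x : nat -> R) N (v : nat -> R) :
  0 < eps -> (0 < N)%nat ->
  (forall k, (1 <= k <= N)%nat -> 0 < hstep x k) ->
  (forall k, (1 <= k <= N - 1)%nat -> 0 < b (x k) /\ 0 <= c (x k)) ->
  0 <= v 0%nat -> 0 <= v N ->
  (forall k, (1 <= k <= N - 1)%nat -> 0 <= LN eps b c x v k) ->
  forall i, (i <= N)%nat -> 0 <= v i.
Proof.
  intros He HN Hh Hbc H0 HNN HL i Hi.
  destruct (argmin_last v N) as [k [Hk [H1 H2]]].
  destruct (Rle_dec 0 (v k)) as [Hp|Hn].
  - specialize (H1 i Hi). lra.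
  - exfalso. assert (k <> 0%nat) by (intro; subst; lra).
    assert (k <> N) by (intro; subst; lra).
    assert (Hk1 : (1 <= k <= N - 1)%nat) by lia.
    specialize (HL k Hk1). destruct (Hbc k Hk1) as [Hb Hc].
    assert (Hhp : 0 < hstep x (S k)) by (apply Hh; lia).
    assert (Hhm : 0 < hstep x k) by (apply Hh; lia).
    assert (Hvp : v k < v (S k)) by (apply H2; lia).
    assert (Hvm : v k <= v (k - 1)%nat) by (apply H1; lia).
    assert (Hs := sigma_bounds (rho eps b x k)).
    assert (Hr : 0 <= rho eps b x k).
    { unfold rho. apply Rmult_le_pos; [|left; apply Rinv_0_lt_compat; lra].
      apply Rmult_le_pos; lra. }
    specialize (Hs Hr).
    unfold LN, D2, Dplus, Dminus, hbar in HL.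
    set (s := Defs.sigma (rho eps b x k)) in *.
    set (hp := hstep x (S k)) in *. set (hm := hstep x k) in *.
    assert (Dp : 0 < (v (S k) - v k) / hp) by (apply Rdiv_lt_0_compat; lra).
    assert (Dm : (v k - v (k-1)%nat) / hm <= 0).
    { unfold Rdiv. apply Rmult_le_0_r; [lra|left; apply Rinv_0_lt_compat; lra]. }
    assert (D2p : 0 < ((v (S k) - v k) / hp - (v k - v (k - 1)%nat) / hm) / ((hm + hp) / 2)).
    { apply Rdiv_lt_0_compat; lra. }
    assert (T1 : 0 < eps * s * (((v (S k) - v k) / hp - (v k - v (k - 1)%nat) / hm) / ((hm + hp) / 2))).
    { apply Rmult_lt_0_compat; [apply Rmult_lt_0_compat|]; lra. }
    assert (T2 : 0 < b (x k) * ((v (S k) - v k) / hp)) by (apply Rmult_lt_0_compat; lra).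
    assert (T3 : c (x k) * v k <= 0).
    { apply Rmult_le_0_l; lra. }
    lra.
Qed.

Lemma LN_comb eps (b c : R -> R) (x : nat -> R) (A B : nat -> R) p q i :
  LN eps b c x (fun j => p * A j + q * B j) i = p * LN eps b c x A i + q * LN eps b c x B i.
Proof. unfold LN, D2, Dplus, Dminus, Rdiv. ring. Qed.

Lemma LN_sub eps (b c : R -> R) (x : nat -> R) (A B : nat -> R) i :
  LN eps b c x (fun j => A j - B j) i = LN eps b c x A i - LN eps b c x B i.
Proof. unfold LN, D2, Dplus, Dminus, Rdiv. ring. Qed.

Lemma LN_add eps (b c : R -> R) (x : nat -> R) (A B : nat -> R) i :
  LN eps b c x (fun j => A j + B j) i = LN eps b c x A i + LN eps b c x B i.
Proof. unfold LN, D2, Dplus, Dminus, Rdiv. ring. Qed.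

Lemma LN_lin eps (b c : R -> R) (x : nat -> R) k :
  (1 <= k)%nat -> hstep x k <> 0 -> hstep x (S k) <> 0 ->
  LN eps b c x (fun j => 2 - x j) k = b (x k) + c (x k) * (2 - x k).
Proof.
  intros Hk H1 H2. unfold LN, D2, Dplus, Dminus, hbar.
  unfold hstep in *. replace (S k - 1)%nat with k in * by lia.
  replace ((2 - x (S k) - (2 - x k)) / (x (S k) - x k)) with (-1) by (field; auto).
  replace ((2 - x k - (2 - x (k - 1)%nat)) / (x k - x (k - 1)%nat)) with (-1) by (field; auto).
  replace ((-1 - -1) / ((x k - x (k - 1)%nat + (x (S k) - x k)) / 2)) with 0 by (unfold Rdiv; ring).
  ring.
Qed.

Fixpoint Psi (beta eps : R) (x : nat -> R) (i : nat) : R :=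
  match i with
  | O => 1
  | S j => Psi beta eps x j / (1 + beta * hstep x (S j) / (2 * eps))
  end.

Lemma Psi_bounds beta eps x i : 0 < beta -> 0 < eps ->
  (forall k, (1 <= k <= i)%nat -> 0 < hstep x k) -> 0 < Psi beta eps x i <= 1.
Proof.
  intros Hb He. induction i as [|i IH]; intros Hh; simpl; [lra|].
  assert (IH' := IH (fun k Hk => Hh k ltac:(lia))).
  assert (Hs : 0 < hstep x (S i)) by (apply Hh; lia).
  assert (Hq : 0 <= beta * hstep x (S i) / (2 * eps)).
  { apply Rlt_le, Rdiv_lt_0_compat; [apply Rmult_lt_0_compat|]; lra. }
  split.
  - apply Rdiv_lt_0_compat; lra.
  - apply Rmult_le_reg_r with (1 + beta * hstep x (S i) / (2 * eps)); [lra|].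
    unfold Rdiv at 1. rewrite Rmult_assoc, Rinv_l by lra. nra.
Qed.

Lemma LN_Psi eps (b c : R -> R) x beta k :
  0 < beta -> 0 < eps -> (1 <= k)%nat ->
  0 < hstep x k -> 0 < hstep x (S k) -> 0 <= c (x k) -> 0 < b (x k) ->
  0 < Psi beta eps x k ->
  Psi beta eps x k * beta / (2 * eps * (1 + beta * hstep x (S k) / (2 * eps))) *
   (b (x k) - beta * hstep x (S k) / (hstep x k + hstep x (S k)))
  <= LN eps b c x (Psi beta eps x) k.
Proof.
  intros Hb He Hk Hm Hp Hc Hb0 HP.
  destruct k as [|k]; [lia|].
  assert (E1 : Psi beta eps x (S (S k)) = Psi beta eps x (S k) / (1 + beta * hstep x (S (S k)) / (2 * eps))) by reflexivity.
  assert (E2 : Psi beta eps x (S k) = Psi beta eps x k / (1 + beta * hstep x (S k) / (2 * eps))) by reflexivity.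
  set (P := Psi beta eps x (S k)) in *.
  set (hp := hstep x (S (S k))) in *. set (hm := hstep x (S k)) in *.
  assert (E3 : Psi beta eps x k = P * (1 + beta * hm / (2 * eps))).
  { rewrite E2. assert (0 < beta * hm) by nra. field. repeat split; lra. }
  unfold LN, D2, Dplus, Dminus, hbar. fold hp hm. simpl (S k - 1)%nat. rewrite Nat.sub_0_r.
  rewrite E1, E3. fold P.
  assert (Hs := sigma_bounds (rho eps b x (S k))).
  set (s := Defs.sigma (rho eps b x (S k))) in *.
  assert (Hrho : 0 <= rho eps b x (S k)).
  { unfold rho. fold hp. apply Rlt_le, Rdiv_lt_0_compat; [apply Rmult_lt_0_compat|]; lra. }
  specialize (Hs Hrho).
  assert (Hpp : 0 < beta * hp / (2*eps)) by (apply Rdiv_lt_0_compat; nra).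
  assert (0 < beta * hp) by nra. assert (0 < beta * hm) by nra.
  assert (Hmm : 0 < beta * hm / (2*eps)) by (apply Rdiv_lt_0_compat; nra).
  set (D := ((P / (1 + beta * hp / (2 * eps)) - P) / hp - (P - P * (1 + beta * hm / (2 * eps))) / hm) / ((hm + hp) / 2)).
  assert (ED : D = P * beta / (2 * eps * (1 + beta * hp / (2 * eps))) * (beta * hp / (hm + hp)) / eps).
  { unfold D. field. repeat split; lra. }
  assert (EP : - (b (x (S k)) * ((P / (1 + beta * hp / (2 * eps)) - P) / hp)) = P * beta / (2 * eps * (1 + beta * hp / (2 * eps))) * b (x (S k))).
  { field. repeat split; lra. }
  assert (HD : 0 <= D).
  { rewrite ED. apply Rlt_le. apply Rdiv_lt_0_compat; [|lra].
    apply Rmult_lt_0_compat; apply Rdiv_lt_0_compat; try lra.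
    - apply Rmult_lt_0_compat; lra.
    - apply Rmult_lt_0_compat; lra. }
  assert (HcP : 0 <= c (x (S k)) * P) by (apply Rmult_le_pos; lra).
  assert (eps * s * D <= eps * D) by (rewrite Rmult_assoc; apply Rmult_le_compat_l; nra).
  assert (eps * D = P * beta / (2 * eps * (1 + beta * hp / (2 * eps))) * (beta * hp / (hm + hp))) by (rewrite ED; field; repeat split; lra).
  lra.
Qed.

Lemma LN_Psi_nonneg eps (b c : R -> R) x beta k :
  0 < beta -> 0 < eps -> (1 <= k)%nat ->
  0 < hstep x k -> 0 < hstep x (S k) -> 0 <= c (x k) -> beta < b (x k) ->
  0 < Psi beta eps x k -> 0 <= LN eps b c x (Psi beta eps x) k.
Proof.
  intros Hb He Hk Hm Hp Hc Hbb HP.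
  eapply Rle_trans; [|apply LN_Psi; auto; lra].
  assert (hstep x (S k) / (hstep x k + hstep x (S k)) <= 1).
  { apply Rmult_le_reg_r with (hstep x k + hstep x (S k)); [lra|].
    unfold Rdiv. rewrite Rmult_assoc, Rinv_l by lra. lra. }
  assert (beta * hstep x (S k) / (hstep x k + hstep x (S k)) <= beta).
  { unfold Rdiv in *. rewrite Rmult_assoc. nra. }
  apply Rmult_le_pos; [|lra].
  apply Rlt_le, Rdiv_lt_0_compat; [nra|].
  assert (0 < beta * hstep x (S k) / (2 * eps)) by (apply Rdiv_lt_0_compat; nra). nra.
Qed.

Lemma LN_Psi_fine eps (b c : R -> R) x beta k h :
  0 < beta -> 0 < eps -> (1 <= k)%nat -> 0 < h ->
  hstep x k = h -> hstep x (S k) = h -> 0 <= c (x k) -> beta < b (x k) ->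
  0 < Psi beta eps x k ->
  Psi beta eps x k * beta ^ 2 / (4 * eps * (1 + beta * h / (2 * eps)))
   <= LN eps b c x (Psi beta eps x) k.
Proof.
  intros Hb He Hk Hh Hm Hp Hc Hbb HP.
  eapply Rle_trans; [|apply LN_Psi; auto; try lra].
  rewrite Hm, Hp.
  replace (beta * h / (h + h)) with (beta / 2) by (field; lra).
  assert (0 < beta * h / (2 * eps)) by (apply Rdiv_lt_0_compat; nra).
  set (r := 1 + beta * h / (2 * eps)) in *.
  assert (0 < r) by (unfold r; lra).
  replace (Psi beta eps x k * beta ^ 2 / (4 * eps * r)) with
    (Psi beta eps x k * beta / (2 * eps * r) * (beta / 2)) by (field; repeat split; lra).
  apply Rmult_le_compat_l; [|lra].
  apply Rlt_le, Rdiv_lt_0_compat; nra.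
Qed.

Lemma exp_Psi beta eps x h J :
  0 < beta -> 0 < eps -> 0 < h -> x 0%nat = 0 ->
  (forall k, (1 <= k <= J)%nat -> hstep x k = h) ->
  forall i, (i <= J)%nat -> exp (- beta * x i / eps) <= Psi beta eps x i.
Proof.
  intros Hb He Hh H0 Hs. induction i as [|i IH]; intros Hi.
  - rewrite H0. simpl. replace (- beta * 0 / eps) with 0 by (field; lra). rewrite exp_0; lra.
  - simpl. assert (E := Hs (S i) ltac:(lia)). rewrite E.
    unfold hstep in E. replace (S i - 1)%nat with i in E by lia.
    replace (x (S i)) with (x i + h) by lra.
    replace (- beta * (x i + h) / eps) with (- beta * x i / eps + - (beta * h / eps)) by (field; lra).
    rewrite exp_plus, exp_Ropp.
    assert (0 < beta * h / eps) by (apply Rdiv_lt_0_compat; nra).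
    assert (Hr : 1 + beta * h / (2 * eps) <= exp (beta * h / eps)).
    { assert (H1 := exp_ineq1_le (beta * h / eps)).
      assert (beta * h / (2 * eps) <= beta * h / eps).
      { replace (beta * h / (2 * eps)) with (beta * h / eps / 2) by (field; lra). lra. }
      lra. }
    assert (0 < 1 + beta * h / (2 * eps)).
    { assert (0 < beta * h / (2 * eps)) by (apply Rdiv_lt_0_compat; nra). lra. }
    unfold Rdiv at 3. apply Rmult_le_compat.
    + left; apply exp_pos.
    + left; apply Rinv_0_lt_compat, exp_pos.
    + apply IH; lia.
    + apply Rinv_le_contravar; lra.
Qed.

Lemma JN_facts Q N J : 0 < Q < 1 -> (0 < N)%nat -> INR J = Q * INR N ->
  (0 < J)%nat /\ (J < N)%nat.
Proof.
  intros HQ HN HJ. assert (0 < INR N) by (apply lt_0_INR; lia).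
  split.
  - apply INR_lt. simpl. nra.
  - apply INR_lt. nra.
Qed.

Lemma xi_pos shishkin a beta eps (N J : nat) : 0 < a -> 0 < beta -> 0 < eps < 1 ->
  (0 < J)%nat -> (J < N)%nat -> 0 < xi shishkin a beta eps N.
Proof.
  intros Ha Hb He HJ HJN. unfold xi.
  apply Rmult_lt_0_compat.
  - apply Rdiv_lt_0_compat; [apply Rmult_lt_0_compat|]; lra.
  - rewrite <- ln_1. apply ln_increasing; [lra|]. unfold lam. destruct shishkin.
    + replace 1 with (INR 1) by reflexivity. apply lt_INR. lia.
    + rewrite <- Rinv_1. apply Rinv_lt_contravar; lra.
Qed.

Section M.
Set Default Proof Using "All".
Variables (shishkin : bool) (a beta eps Q : R) (N J : nat).
Hypotheses (Ha : 0 < a) (Hb : 0 < beta) (He : 0 < eps < 1) (HQ : 0 < Q < 1)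
  (HN : (0 < N)%nat) (HJ : INR J = Q * INR N) (HX : xi shishkin a beta eps N <= Q).

Let X := xi shishkin a beta eps N.
Let x := mesh shishkin a beta eps N J.
Let h := X / INR J.
Let H := (1 - X) / (INR N - INR J).

Lemma JNf : (0 < J)%nat /\ (J < N)%nat.
Proof. exact (JN_facts Q N J HQ HN HJ). Qed.

Lemma Xpos : 0 < X.
Proof. destruct JNf. exact (xi_pos shishkin a beta eps N J Ha Hb He H0 H1). Qed.

Lemma hpos : 0 < h.
Proof. destruct JNf. unfold h. apply Rdiv_lt_0_compat. apply Xpos. apply lt_0_INR; lia. Qed.

Lemma Hpos : 0 < H.
Proof. destruct JNf. unfold H. assert (X <= Q) by exact HX. apply Rdiv_lt_0_compat. lra.
  assert (INR J < INR N) by (apply lt_INR; lia). lra. Qed.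

Lemma x_low i : (i <= J)%nat -> x i = INR i * h.
Proof. intros Hi. unfold x, mesh. fold X. fold h. rewrite (proj2 (Nat.leb_le i J) Hi). reflexivity. Qed.

Lemma x_high i : (J < i)%nat -> x i = X + (INR i - INR J) * H.
Proof. intros Hi. unfold x, mesh. fold X. rewrite (proj2 (Nat.leb_gt i J) Hi). unfold H. unfold Rdiv. ring. Qed.

Lemma JhX : INR J * h = X.
Proof. destruct JNf. unfold h. field. apply not_0_INR; lia. Qed.

Lemma hstep_low k : (1 <= k <= J)%nat -> hstep x k = h.
Proof.
  intros Hk. unfold hstep. rewrite !x_low by lia.
  replace (INR k) with (INR (k-1) + 1). ring.
  replace k with (S (k-1)) at 2 by lia. rewrite S_INR. reflexivity.
Qed.

Lemma hstep_pos k : (1 <= k <= N)%nat -> 0 < hstep x k.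
Proof.
  intros Hk. destruct (Compare_dec.le_lt_dec k J).
  - rewrite hstep_low by lia. apply hpos.
  - unfold hstep. rewrite (x_high k) by lia. assert (HH := Hpos).
    destruct (Nat.eq_dec k (S J)) as [E|E].
    + subst k. replace (S J - 1)%nat with J by lia. rewrite x_low by lia. rewrite JhX.
      rewrite S_INR. lra.
    + rewrite x_high by lia. rewrite minus_INR by lia. simpl. lra.
Qed.

Lemma x_range i : (i <= N)%nat -> 0 <= x i <= 1.
Proof.
  intros Hi. assert (HXp := Xpos). assert (X <= Q) by exact HX. destruct JNf. destruct (Compare_dec.le_lt_dec i J).
  - rewrite x_low by lia. assert (HJX := JhX). assert (X <= Q) by exact HX. assert (HH := hpos).
    assert (INR i <= INR J) by (apply le_INR; lia). assert (0 <= INR i) by apply pos_INR. nra.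
  - rewrite x_high by lia. assert (HH := Hpos).
    assert (INR J < INR i) by (apply lt_INR; lia). assert (INR i <= INR N) by (apply le_INR; lia).
    assert (INR J < INR N) by (apply lt_INR; lia).
    split; [nra|].
    assert ((INR i - INR J) * H <= (INR N - INR J) * H) by nra.
    assert ((INR N - INR J) * H = 1 - X) by (unfold H; field; lra). lra.
Qed.

Lemma x_int i : (1 <= i <= N - 1)%nat -> 0 < x i < 1.
Proof.
  intros Hi. assert (HXp := Xpos). assert (X <= Q) by exact HX. destruct JNf. destruct (Compare_dec.le_lt_dec i J).
  - rewrite x_low by lia. assert (HJX := JhX). assert (X <= Q) by exact HX. assert (HH := hpos).
    assert (INR i <= INR J) by (apply le_INR; lia). assert (1 <= INR i) by (apply (le_INR 1); lia).
    split; nra.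
  - rewrite x_high by lia. assert (HH := Hpos).
    assert (INR J < INR i) by (apply lt_INR; lia). assert (INR i < INR N) by (apply lt_INR; lia).
    split; [nra|].
    assert ((INR i - INR J) * H < (INR N - INR J) * H) by nra.
    assert ((INR N - INR J) * H = 1 - X) by (unfold H; field; lra). lra.
Qed.

Lemma x0 : x 0%nat = 0.
Proof. rewrite x_low by lia. simpl. ring. Qed.

Lemma xN : x N = 1.
Proof. destruct JNf. rewrite x_high by lia. assert (INR J < INR N) by (apply lt_INR; lia).
  unfold H. field. lra. Qed.

Lemma r_bound : 1 + beta * h / (2 * eps) <= (1 + a / (2 * Q)) * kappa shishkin eps N.
Proof.
  destruct JNf. assert (HNp : 0 < INR N) by (apply lt_0_INR; lia).
  assert (E : beta * h / (2 * eps) = a / (2 * Q) * (ln (lam shishkin eps N) / INR N)).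
  { unfold h, X, xi. rewrite HJ. field. repeat split; lra. }
  rewrite E. assert (0 < a / (2*Q)) by (apply Rdiv_lt_0_compat; lra).
  unfold lam, kappa. destruct shishkin.
  - assert (ln (INR N) <= INR N).
    { rewrite <- (ln_exp (INR N)) at 2. apply ln_le; [lra|].
      assert (Hx := exp_ineq1_le (INR N)). lra. }
    assert (ln (INR N) / INR N <= 1).
    { apply Rmult_le_reg_r with (INR N); [lra|]. unfold Rdiv. rewrite Rmult_assoc, Rinv_l by lra. lra. }
    nra.
  - rewrite ln_Rinv by lra.
    assert (ln eps < 0) by (rewrite <- ln_1; apply ln_increasing; lra).
    rewrite Rabs_left by lra.
    assert (0 <= - ln eps / INR N) by (apply Rdiv_le_0_compat; lra).
    nra.
Qed.

End M.

Theorem theorem2 (b c : R -> R) (beta Q a Cstar : R) :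
  Ck01 4 b -> Ck01 4 c ->
  0 < beta -> (forall x, 0 <= x <= 1 -> beta < b x) ->
  (forall x, 0 <= x <= 1 -> 0 <= c x) ->
  0 < Q < 1 -> (exists p q : Z, IZR q <> 0 /\ Q = IZR p / IZR q) ->
  0 < a -> 0 < Cstar ->
  exists C : R, 0 < C /\
  forall (shishkin : bool) (f : R -> R) (eps : R) (N J : nat) (eta1 eta2 : R)
         (u u0 : R -> R) (W : nat -> R),
    Ck01 4 f ->
    0 < eps < 1 ->
    (0 < N)%nat ->
    INR J = Q * INR N ->
    xi shishkin a beta eps N <= Q ->
    0 <= eta1 -> 0 <= eta2 ->
    cont_on01 u ->
    (forall x, 0 < x < 1 -> ex_derive u x /\ ex_derive (Derive u) x) ->
    (forall x, 0 < x < 1 ->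
       - eps * Derive_n u 2 x - b x * Derive u x + c x * u x = f x) ->
    u 0 = 0 -> u 1 = 0 ->
    cont_on01 u0 ->
    (forall x, 0 < x < 1 -> ex_derive u0 x) ->
    (forall x, 0 < x < 1 -> - b x * Derive u0 x + c x * u0 x = f x) ->
    u0 1 = 0 ->
    W 0%nat = - u0 0 ->
    (forall i, (1 <= i <= N - 1)%nat ->
       LN eps b c (mesh shishkin a beta eps N J) W i
       = eps * Derive_n u0 2 (mesh shishkin a beta eps N J i)) ->
    W N = 0 ->
    (forall i, (1 <= i <= J - 1)%nat ->
       Rabs (tau eps b (mesh shishkin a beta eps N J) (fun x => u x - u0 x) i)
       <= Cstar * eta1 *
          (1 + / eps * exp (- beta * mesh shishkin a beta eps N J i / eps))) ->
    (forall i, (J <= i <= N - 1)%nat ->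
       Rabs (tau eps b (mesh shishkin a beta eps N J) (fun x => u x - u0 x) i)
       <= Cstar * eta2) ->
    forall i, (i <= N)%nat ->
      Rabs ((u (mesh shishkin a beta eps N J i) - u0 (mesh shishkin a beta eps N J i))
            - W i)
      <= C * Rmax (kappa shishkin eps N * eta1) eta2.
Proof.
  intros Hb Hc Hbeta Hbb Hcc HQ _ Ha HC.
  assert (HQ2 : 0 < a / (2 * Q)) by (apply Rdiv_lt_0_compat; lra).
  exists (4 * Cstar / beta + 4 * Cstar * (1 + a / (2 * Q)) / beta ^ 2).
  split.
  { assert (0 < 4 * Cstar / beta) by (apply Rdiv_lt_0_compat; lra).
    assert (0 < 4 * Cstar * (1 + a / (2 * Q)) / beta ^ 2).
    { apply Rdiv_lt_0_compat; [|apply pow_lt; lra]. nra. }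
    lra. }
  intros shishkin f eps N J eta1 eta2 u u0 W Hf He HN HJ HX He1 He2 _ Hu Hue Hu00 Hu01 _ Hu0 Hu0e Hu01' HW0 HWe HWN Ht1 Ht2.
  pose proof (JNf shishkin a beta eps Q N J Ha Hbeta He HQ HN HJ HX) as [HJ0 HJN].
  pose proof (hpos shishkin a beta eps Q N J Ha Hbeta He HQ HN HJ HX) as Hh.
  pose proof (hstep_low shishkin a beta eps Q N J Ha Hbeta He HQ HN HJ HX) as Hsl.
  pose proof (hstep_pos shishkin a beta eps Q N J Ha Hbeta He HQ HN HJ HX) as Hsp.
  pose proof (x_range shishkin a beta eps Q N J Ha Hbeta He HQ HN HJ HX) as Hxr.
  pose proof (x_int shishkin a beta eps Q N J Ha Hbeta He HQ HN HJ HX) as Hxi.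
  pose proof (x0 shishkin a beta eps Q N J Ha Hbeta He HQ HN HJ HX) as Hx0.
  pose proof (xN shishkin a beta eps Q N J Ha Hbeta He HQ HN HJ HX) as HxN.
  pose proof (r_bound shishkin a beta eps Q N J Ha Hbeta He HQ HN HJ HX) as Hrb.
  set (x := mesh shishkin a beta eps N J) in *.
  set (h := xi shishkin a beta eps N / INR J) in *.
  set (r := 1 + beta * h / (2 * eps)) in *.
  assert (Hr1 : 1 <= r).
  { assert (0 < beta * h / (2 * eps)) by (apply Rdiv_lt_0_compat; nra). unfold r; lra. }
  set (Ps := Psi beta eps x).
  assert (HPs : forall i, (i <= N)%nat -> 0 < Ps i <= 1).
  { intros i Hi. apply Psi_bounds; auto; try lra. intros k Hk; apply Hsp; lia. }
  set (K1 := Cstar * (eta1 + eta2) / beta).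
  set (K2 := 4 * Cstar * eta1 / beta ^ 2).
  assert (HK1 : 0 <= K1) by (unfold K1; apply Rdiv_le_0_compat; nra).
  assert (HK2 : 0 <= K2) by (unfold K2; apply Rdiv_le_0_compat; [nra|apply pow_lt; lra]).
  set (A := fun j => 2 - x j).
  set (Phi := fun j => K1 * A j + (K2 * r) * Ps j).
  set (e := fun j => (u (x j) - u0 (x j)) - W j).
  assert (Hee : forall k, (1 <= k <= N - 1)%nat ->
     LN eps b c x e k = tau eps b x (fun y => u y - u0 y) k).
  { intros k Hk.
    assert (E1 : LN eps b c x e k = LN eps b c x (fun j => u (x j) - u0 (x j)) k - LN eps b c x W k)
      by exact (LN_sub eps b c x (fun j => u (x j) - u0 (x j)) W k).
    rewrite E1, HWe by auto.
    assert (Hw := w_eq b c f u u0 eps beta (x k) Hb Hc Hf Hbeta Hbb Hu Hue Hu0 Hu0e (Hxi k Hk)).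
    unfold tau, LN in *. unfold Rdiv in *. lra. }
  assert (HPhi : forall k, (1 <= k <= N - 1)%nat ->
     Rabs (tau eps b x (fun y => u y - u0 y) k) <= LN eps b c x Phi k).
  { intros k Hk.
    assert (E : LN eps b c x Phi k = K1 * LN eps b c x A k + (K2 * r) * LN eps b c x Ps k)
      by exact (LN_comb eps b c x A Ps K1 (K2 * r) k).
    assert (Hm : 0 < hstep x k) by (apply Hsp; lia).
    assert (Hp : 0 < hstep x (S k)) by (apply Hsp; lia).
    assert (Hxk := Hxr k ltac:(lia)).
    assert (Hbk := Hbb (x k) Hxk). assert (Hck := Hcc (x k) Hxk).
    assert (EA : LN eps b c x A k = b (x k) + c (x k) * (2 - x k)).
    { apply LN_lin. lia. lra. lra. }

    assert (HA : K1 * beta <= K1 * LN eps b c x A k).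
    { rewrite EA. apply Rmult_le_compat_l; auto. nra. }
    assert (EK1 : K1 * beta = Cstar * (eta1 + eta2)) by (unfold K1; field; lra).
    assert (HPk := HPs k ltac:(lia)).
    destruct (Compare_dec.le_lt_dec J k) as [HkJ|HkJ].
    - assert (0 <= LN eps b c x Ps k) by (apply LN_Psi_nonneg; [lra|lra|lia|exact Hm|exact Hp|exact Hck|exact Hbk|apply HPk]).
      assert (0 <= K2 * r * LN eps b c x Ps k) by (apply Rmult_le_pos; nra).
      assert (Ht := Ht2 k ltac:(lia)). nra.
    - assert (HL := LN_Psi_fine eps b c x beta k h Hbeta ltac:(lra) ltac:(lia) Hh
                 (Hsl k ltac:(lia)) (Hsl (S k) ltac:(lia)) Hck Hbk (proj1 HPk)).
      fold r in HL.
      assert (Hex := exp_Psi beta eps x h J Hbeta ltac:(lra) Hh Hx0 Hsl k ltac:(lia)).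
      assert (Ht := Ht1 k ltac:(lia)).
      assert (E2 : K2 * r * (Ps k * beta ^ 2 / (4 * eps * r)) = Cstar * eta1 * (/ eps * Ps k)).
      { unfold K2. field. repeat split; lra. }
      assert (K2 * r * (Ps k * beta ^ 2 / (4 * eps * r)) <= K2 * r * LN eps b c x Ps k)
        by (apply Rmult_le_compat_l; [nra|exact HL]).
      assert (/ eps * exp (- beta * x k / eps) <= / eps * Ps k).
      { apply Rmult_le_compat_l; [left; apply Rinv_0_lt_compat; lra| exact Hex]. }
      assert (Cstar * eta1 * (/ eps * exp (- beta * x k / eps)) <= Cstar * eta1 * (/ eps * Ps k))
        by (apply Rmult_le_compat_l; nra).
      nra. }
  assert (Hsb : forall k, (1 <= k <= N - 1)%nat -> 0 < b (x k) /\ 0 <= c (x k)).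
  { intros k Hk. assert (Hxk := Hxr k ltac:(lia)). split; [assert (Hbk := Hbb (x k) Hxk); lra | auto]. }
  assert (Hph : forall j, (j <= N)%nat -> 0 <= Phi j).
  { intros j Hj. unfold Phi, A. assert (Hxj := Hxr j Hj). assert (HPj := HPs j Hj).
    assert (0 <= K1 * (2 - x j)) by (apply Rmult_le_pos; lra).
    assert (0 <= K2 * r * Ps j) by (apply Rmult_le_pos; [apply Rmult_le_pos|]; lra). lra. }
  assert (He0 : e 0%nat = 0) by (unfold e; rewrite Hx0, HW0, Hu00; ring).
  assert (HeN : e N = 0) by (unfold e; rewrite HxN, HWN, Hu01, Hu01'; ring).
  assert (HSp : forall k, (1 <= k <= N)%nat -> 0 < hstep x k) by exact Hsp.
  assert (V1 := dmp eps b c x N (fun j => Phi j - e j) ltac:(lra) HN HSp Hsb).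
  assert (V2 := dmp eps b c x N (fun j => Phi j + e j) ltac:(lra) HN HSp Hsb).
  assert (HP0 := Hph 0%nat ltac:(lia)). assert (HPN := Hph N ltac:(lia)).
  intros i Hi.
  assert (W1 : 0 <= Phi i - e i).
  { apply V1; auto; try (simpl; lra).
    intros k Hk. rewrite LN_sub. rewrite Hee by auto. specialize (HPhi k Hk).
    assert (Hab := Rle_abs (tau eps b x (fun y => u y - u0 y) k)). lra. }
  assert (W2 : 0 <= Phi i + e i).
  { apply V2; auto; try (simpl; lra).
    intros k Hk. rewrite LN_add. rewrite Hee by auto. specialize (HPhi k Hk).
    assert (Hab := Rle_abs (- tau eps b x (fun y => u y - u0 y) k)). rewrite Rabs_Ropp in Hab. lra. }
  change (Rabs (e i) <= (4 * Cstar / beta + 4 * Cstar * (1 + a / (2 * Q)) / beta ^ 2) *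
    Rmax (kappa shishkin eps N * eta1) eta2).
  assert (Hea : Rabs (e i) <= Phi i) by (apply Rabs_le; lra).
  assert (Hk1 : 1 <= kappa shishkin eps N).
  { unfold kappa. destruct shishkin; [lra|].
    assert (0 <= Rabs (ln eps) / INR N).
    { apply Rdiv_le_0_compat; [apply Rabs_pos| apply lt_0_INR; lia]. } lra. }
  set (M := Rmax (kappa shishkin eps N * eta1) eta2) in *.
  assert (HM1 : kappa shishkin eps N * eta1 <= M) by apply Rmax_l.
  assert (HM2 : eta2 <= M) by apply Rmax_r.
  assert (HM3 : eta1 <= M) by nra.
  assert (HPi := HPs i Hi). assert (Hxi' := Hxr i Hi).
  assert (B1 : Phi i <= 2 * K1 + K2 * r).
  { unfold Phi, A. assert (K1 * (2 - x i) <= 2 * K1) by nra.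
    assert (K2 * r * Ps i <= K2 * r) by (assert (0 <= K2 * r) by nra; nra). lra. }
  assert (B2 : 2 * K1 <= 4 * Cstar / beta * M).
  { unfold K1. unfold Rdiv. assert (0 < / beta) by (apply Rinv_0_lt_compat; lra).
    assert (0 < Cstar * / beta) by nra.
    assert (Cstar * / beta * (eta1 + eta2) <= Cstar * / beta * (2 * M)) by (apply Rmult_le_compat_l; lra).
    nra. }
  assert (B3 : K2 * r <= 4 * Cstar * (1 + a / (2 * Q)) / beta ^ 2 * M).
  { unfold K2. assert (0 < / beta ^ 2) by (apply Rinv_0_lt_compat, pow_lt; lra).
    unfold Rdiv. 
    assert (r <= (1 + a / (2 * Q)) * kappa shishkin eps N) by exact Hrb.
    assert (eta1 * r <= (1 + a / (2 * Q)) * M) by nra.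
    assert (4 * Cstar * / beta ^ 2 * (eta1 * r) <= 4 * Cstar * / beta ^ 2 * ((1 + a / (2 * Q)) * M)).
    { apply Rmult_le_compat_l; [|lra]. nra. }
    nra. }
  lra.
Qed.
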